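(* Let $n\geq 2$. Assume that for every homogeneous, well-ordered $(n-1)\times(n-1)$ integer matrix $M'=(m'_{ij})$ of any degree $e$, a general form of degree $e$ in $\mathbb{C}[x,y,z]$ is the determinant of a matrix of forms with degree matrix $M'$ if and only if (1) $m'_{ii}\ge 0$ for all $i$ and (2) whenever $m'_{k\,k-1}<0$ for some $k$, the submatrix obtained by erasing the first $k-1$ rows and columns of $M'$ has degree $0$ or $e$. Let $M=(m_{ij})$ be a homogeneous, well-ordered $n\times n$ integer matrix of degree $d$ such that $m_{ii}\ge0$ for all $i$, and such that whenever $m_{k\,k-1}<0$ for some $k\in\{2,\dots,n\}$ the submatrix obtained by erasing the first $k-1$ rows and columns of $M$ has degree $0$ or $d$. Assume $m_{i1}=0$ for some $i$. Then a general form of degree $d$ in $\mathbb{C}[x,y,z]$ is the determinant of a matrix of forms whose degree matrix is $M$.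
   Context: A matrix of integers is homogeneous if every $2\times2$ submatrix $\begin{pmatrix} a&b\\ c&e\end{pmatrix}$ satisfies $a+e=b+c$; the degree of a square homogeneous matrix $(m_{ij})$ is $\sum_i m_{i\sigma(i)}$, independent of the permutation $\sigma$. Well-ordered: for $i'>i$, $j'>j$, $m_{i'j}\le m_{ij}$ and $m_{ij'}\ge m_{ij}$. A matrix of forms $(f_{ij})$ has degree matrix $(m_{ij})$ if each $f_{ij}$ is a homogeneous polynomial of degree $m_{ij}$ (zero allowed; necessarily zero if $m_{ij}<0$). ''General form'' means forms in a nonempty Zariski-open subset of the space of forms of that degree. *)

(* Defs.v *)
From HB Require Import structures.
From mathcomp Require Import all_boot all_order all_algebra.
From mathcomp Require Import mpoly.
Set Implicit Arguments. Unset Strict Implicit. Unset Printing Implicit Defensive.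
Import Order.TTheory GRing.Theory Num.Theory.
Local Open Scope ring_scope.

Definition mx_homogeneous n (M : 'M[int]_n) : Prop :=
  forall (i i' j j' : 'I_n), M i j + M i' j' = M i j' + M i' j.

Definition mx_deg n (M : 'M[int]_n) : int := \sum_(i < n) M i i.

Definition well_ordered n (M : 'M[int]_n) : Prop :=
  forall (i i' j j' : 'I_n), (i < i')%N -> (j < j')%N ->
    M i' j <= M i j /\ M i j <= M i j'.

(* degree of the submatrix obtained by erasing the first k rows and columns
   (k counted in nat; with the paper's 1-based row index k_p = k+1 of
   m_{k_p, k_p-1}, this erases the first k_p - 1 rows and columns) *)
Definition tail_deg n (M : 'M[int]_n) (k : nat) : int :=
  \sum_(i < n | (k <= i)%N) M i i.

Definition diag_nonneg n (M : 'M[int]_n) : Prop := forall i : 'I_n, 0 <= M i i.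

Definition subdiag_cond n (M : 'M[int]_n) (e : int) : Prop :=
  forall (k l : 'I_n), (val k = (val l).+1)%N -> M k l < 0 ->
    tail_deg M k = 0 \/ tail_deg M k = e.

Definition form (F : closedFieldType) (d : nat) (f : {mpoly F[3]}) : Prop :=
  f \is ishomog1 d (@mdeg 3).

Definition has_degree_matrix (F : closedFieldType) n
    (A : 'M[{mpoly F[3]}]_n) (M : 'M[int]_n) : Prop :=
  forall i j, if (0 <= M i j) then form (absz (M i j)) (A i j) else A i j = 0.

Definition det_with_degree_matrix (F : closedFieldType) n (M : 'M[int]_n)
    (f : {mpoly F[3]}) : Prop :=
  exists A : 'M[{mpoly F[3]}]_n, has_degree_matrix A M /\ \det A = f.

Definition poly_fun (F : closedFieldType) (phi : {mpoly F[3]} -> F) : Prop :=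
  exists (k : nat) (ms : 'I_k -> 'X_{1..3}) (q : {mpoly F[k]}),
    forall f, phi f = q.@[fun i => f@_(ms i)].

Definition zariski_open (F : closedFieldType) (d : nat)
    (U : {mpoly F[3]} -> Prop) : Prop :=
  exists S : ({mpoly F[3]} -> F) -> Prop,
    (forall phi, S phi -> poly_fun phi) /\
    (forall f, U f <-> (form d f /\ exists phi, S phi /\ phi f != 0)).

Definition general_form (F : closedFieldType) (d : nat)
    (P : {mpoly F[3]} -> Prop) : Prop :=
  exists U, zariski_open d U /\ (exists f, U f) /\ (forall f, U f -> P f).

(* Main.v *)
Require Import Defs.
From HB Require Import structures.
From mathcomp Require Import all_boot all_order all_algebra.
From mathcomp Require Import mpoly.
From mathcomp Require Import zify ring.
Import Order.TTheory GRing.Theory Num.Theory.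
Local Open Scope ring_scope.

Lemma lift_lt m (h : 'I_m.+1) (x y : 'I_m) : (x < y)%N -> (lift h x < lift h y)%N.
Proof. rewrite /= /bump; case: (leqP h x); case: (leqP h y) => /=; lia. Qed.

Theorem lemma5p7 (F : closedFieldType) (charF0 : [pchar F] =i pred0)
  (n : nat) (hn : (2 <= n)%N)
  (IH : forall M' : 'M[int]_(n.-1),
     mx_homogeneous M' -> well_ordered M' -> 0 <= mx_deg M' ->
     (general_form (absz (mx_deg M')) (@det_with_degree_matrix F _ M') <->
      (diag_nonneg M' /\ subdiag_cond M' (mx_deg M'))))
  (M : 'M[int]_n) (hM : mx_homogeneous M) (wM : well_ordered M)
  (h1 : diag_nonneg M) (h2 : subdiag_cond M (mx_deg M))
  (h0 : exists i j : 'I_n, val j = 0%N /\ M i j = 0) :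
  general_form (absz (mx_deg M)) (@det_with_degree_matrix F _ M).
Proof.
case: n hn IH M hM wM h1 h2 h0 => [//|m] hn IH M hM wM h1 h2 h0.
have [i [j [j0 Mi0]]] := h0.
have ej : j = ord0 by apply/val_inj.
subst j.
have dec : forall r c, M r c = M r ord0 + M ord0 c - M ord0 ord0.
  move=> r c; have := hM r ord0 ord0 c; lia.
pose o1 : 'I_m.+1 := Ordinal hn.
have bmono : forall c c' : 'I_m.+1, (c < c')%N -> M ord0 c <= M ord0 c'.
  by move=> c c' hc; case: (wM ord0 o1 c c' isT hc).
pose M' : 'M[int]_m := \matrix_(r, c) M (lift i r) (lift ord0 c).
have degE : mx_deg M' = mx_deg M.
  rewrite /mx_deg.
  under eq_bigr => r _ do rewrite mxE (dec (lift i r)).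
  under [X in _ = X]eq_bigr => r _ do rewrite (dec r r).
  rewrite !big_split /= !sumrN !sumr_const !card_ord.
  rewrite (bigD1_ord i) //= (big_ord_recl _ (fun r => M ord0 r)) /= Mi0 mulrS.
  rewrite big_mkcond /=.
  ring.
have degnn : 0 <= mx_deg M.
  by rewrite /mx_deg; apply: sumr_ge0 => r _; apply: h1.
have hM' : mx_homogeneous M'.
  by move=> r r' c c'; rewrite !mxE; apply: hM.
have wM' : well_ordered M'.
  move=> r r' c c' hr hc; rewrite !mxE.
  by apply: wM; apply: lift_lt.
have dn' : diag_nonneg M'.
  move=> r; rewrite mxE.
  have := h1 (lift i r); have := h1 (lift ord0 r).
  rewrite (dec (lift i r) (lift i r)) (dec (lift ord0 r) (lift ord0 r))
    (dec (lift i r) (lift ord0 r)).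
  case: (leqP i r) => hir.
    have -> : lift i r = lift ord0 r by apply/val_inj; rewrite /= /bump hir.
    lia.
  have -> : lift i r = widen_ord (leqnSn m) r.
    by apply/val_inj; rewrite /= /bump leqNgt hir.
  have hb : M ord0 (widen_ord (leqnSn m) r) <= M ord0 (lift ord0 r).
    by apply: bmono; rewrite /= /bump /=.
  lia.
have sd' : subdiag_cond M' (mx_deg M').
  move=> k l hkl; rewrite mxE.
  case: (leqP i k) => hik.
  - have hl : val (lift i k) = (val (lift ord0 l)).+1.
      by rewrite /= /bump hik /= hkl.
    move=> hneg; have := h2 _ _ hl hneg.
    have -> : tail_deg M' k = tail_deg M (lift i k).
      rewrite /tail_deg big_mkcond [in RHS]big_mkcond big_ord_recl /=.
      rewrite /bump hik /= add0r.
      apply: eq_bigr => r _; rewrite mxE /bump /= add1n ltnS.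
      case: (leqP k r) => // hkr.
      by have -> : lift i r = lift ord0 r by apply/val_inj; rewrite /= /bump (leq_trans hik hkr).
    by rewrite degE.
  - have -> : lift i k = widen_ord (leqnSn m) k.
      by apply/val_inj; rewrite /= /bump leqNgt hik.
    have -> : lift ord0 l = widen_ord (leqnSn m) k.
      by apply/val_inj; rewrite /= /bump /= hkl.
    move=> hneg; have := h1 (widen_ord (leqnSn m) k); lia.
have degnn' : 0 <= mx_deg M' by rewrite degE.
have [_ gf] := IH M' hM' wM' degnn'.
have [U [zU [neU PU]]] := gf (conj dn' sd').
rewrite -degE; exists U; split => //; split => // f Uf.
have [A' [hA' detA']] := PU f Uf.
pose A : 'M[{mpoly F[3]}]_m.+1 := \matrix_(r, c)
  match unlift ord0 c with
  | None => if r == i then (-1) ^+ i else 0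
  | Some c' => match unlift i r with None => 0 | Some r' => A' r' c' end end.
exists A; split.
- move=> r c; rewrite mxE.
  case: (unliftP ord0 c) => [c'|] ->.
  + case: (unliftP i r) => [r'|] ->.
    * by have := hA' r' c'; rewrite mxE.
    * by case: ifP => _ //; exact: dhomog0.
  + case: (eqVneq r i) => [->|_]; last by case: ifP => _ //; exact: dhomog0.
    rewrite Mi0 /=.
    have hN : (-1 : {mpoly F[3]}) \is ishomog1 0 (@mdeg 3).
      by rewrite rpredN; exact: dhomog1.
    by have := dhomogMn i hN; rewrite mul0n.
- rewrite (expand_det_col _ ord0) (bigD1 i) //= big1 ?addr0; last first.
    by move=> r hr; rewrite mxE unlift_none (negbTE hr) mul0r.
  rewrite mxE unlift_none eqxx /cofactor.
  have -> : row' i (col' ord0 A) = A'.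
    by apply/matrixP => r c; rewrite !mxE !liftK.
  rewrite mulrA -exprD addn0 -signr_odd oddD addbb expr0 mul1r.
  by [].

Qed.
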